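(* Let $G$ be a connected cubic graph of order at least $6$. Then $\alpha(G)\geq \frac{3}{5}\,\mathrm{diss}(G)$.
   Context: All graphs are finite, simple and undirected. $\alpha(G)$ denotes the independence number of $G$. A set $D$ of vertices of $G$ is a dissociation set if the subgraph $G[D]$ induced by $D$ has maximum degree at most $1$; the dissociation number $\mathrm{diss}(G)$ is the maximum order of a dissociation set in $G$. *)

(* Defs.v *)
From mathcomp Require Import all_boot.
Set Implicit Arguments. Unset Strict Implicit. Unset Printing Implicit Defensive.

Definition simple_graph (T : finType) (e : rel T) : Prop :=
  symmetric e /\ irreflexive e.

Definition nbhd (T : finType) (e : rel T) (x : T) : {set T} := [set y | e x y].

Definition cubic (T : finType) (e : rel T) : Prop :=
  forall x : T, #|nbhd e x| = 3.

Definition connected_graph (T : finType) (e : rel T) : Prop :=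
  forall x y : T, connect e x y.

Definition independent (T : finType) (e : rel T) (S : {set T}) : bool :=
  [forall x in S, forall y in S, ~~ e x y].

Definition dissociation (T : finType) (e : rel T) (D : {set T}) : bool :=
  [forall x in D, #|D :&: nbhd e x| <= 1].

Definition alpha (T : finType) (e : rel T) : nat :=
  \max_(S : {set T} | independent e S) #|S|.

Definition diss (T : finType) (e : rel T) : nat :=
  \max_(D : {set T} | dissociation e D) #|D|.

(* Main.v *)
Require Import Defs.
From mathcomp Require Import all_boot zify.
From Stdlib Require Import Classical.

Set Implicit Arguments. Unset Strict Implicit. Unset Printing Implicit Defensive.

Section G.
Variables (T : finType) (e : rel T).
Hypothesis esym : symmetric e.
Hypothesis eirr : irreflexive e.
Hypothesis cub : forall x, #|nbhd e x| = 3.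
Hypothesis conn : forall x y, connect e x y.

Lemma inN x y : (y \in nbhd e x) = e x y.
Proof. by rewrite inE. Qed.

Lemma exits (Z : {set T}) z0 t : z0 \in Z -> t \notin Z ->
  exists z u, [/\ z \in Z, u \notin Z & e z u].
Proof.
move=> z0Z tZ; apply: NNPP => H.
have cl : closed e (mem Z).
  move=> x y exy; apply/idP/idP => /= h.
  - by apply: contraT => yZ; case: H; exists x, y.
  - by apply: contraT => xZ; case: H; exists y, x; rewrite esym.
by move: (closed_connect cl (conn z0 t)); rewrite /= z0Z (negbTE tZ).
Qed.

Lemma third x p q : e x p -> e x q -> p != q ->
  exists r, [/\ e x r, r != p, r != q & forall w, e x w -> [\/ w = p, w = q | w = r]].
Proof.
move=> xp xq pq.
have sub : [set p; q] \subset nbhd e x.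
  by apply/subsetP => w; rewrite !inE => /orP[]/eqP->; rewrite ?xp ?xq.
have c2 : #|[set p; q]| = 2 by rewrite cards2 pq.
have : #|nbhd e x :\: [set p; q]| = 1.
  by rewrite cardsD (setIidPr sub) c2 cub.
move/eqP/cards1P => [r hr].
have rin : r \in nbhd e x :\: [set p; q] by rewrite hr set11.
move: rin; rewrite !inE negb_or => /andP[/andP[rp rq] xr].
exists r; split => // w xw.
have : w \in nbhd e x by rewrite inE.
case: (boolP (w \in [set p; q])).
  by rewrite !inE => /orP[]/eqP-> _; [apply: Or31|apply: Or32].
move=> wpq wN; have : w \in nbhd e x :\: [set p; q] by rewrite inE wpq wN.
by rewrite hr inE => /eqP->; apply: Or33.
Qed.


Lemma L1 (P U : {set T}) (c0 : T -> 'I_3) :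
  [disjoint P & U] ->
  (forall x y, x \in P -> y \in P -> e x y -> c0 x != c0 y) ->
  (forall Z : {set T}, Z \subset U -> Z != set0 ->
     exists2 z, z \in Z & #|c0 @: (nbhd e z :&: P)| + #|nbhd e z :&: Z| < 3) ->
  exists c : T -> 'I_3, (forall x, x \in P -> c x = c0 x) /\
    (forall x y, x \in P :|: U -> y \in P :|: U -> e x y -> c x != c y).
Proof.
move=> dPU p0 H.
suff S : forall n (Z : {set T}), #|Z| <= n -> Z \subset U ->
    exists c : T -> 'I_3, (forall x, x \in P -> c x = c0 x) /\
    (forall x y, x \in P :|: Z -> y \in P :|: Z -> e x y -> c x != c y).
  by have [c [h1 h2]] := S _ U (leqnn _) (subxx _); exists c.
elim=> [|n IH] Z; (case: (eqVneq Z set0) => [->|Zn0];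
   [by move=> _ _; exists c0; split => // x y; rewrite setU0; exact: p0|]).
  by rewrite leqn0 cards_eq0 (negbTE Zn0).
move=> cZ sZ.
have [z zZ hz] := H Z sZ Zn0.
have zU : z \in U by apply: (subsetP sZ).
have zP : z \in P = false by apply: disjointFl dPU zU.
have [c [cP cpr]] : exists c : T -> 'I_3, (forall x, x \in P -> c x = c0 x) /\
    (forall x y, x \in P :|: (Z :\ z) -> y \in P :|: (Z :\ z) -> e x y -> c x != c y).
  apply: IH; last by apply: subset_trans (subD1set Z z) sZ.
  by move: cZ; rewrite (cardsD1 z Z) zZ.
pose F := c @: (nbhd e z :&: (P :|: (Z :\ z))).
have FA : F \subset (c0 @: (nbhd e z :&: P)) :|: (c @: (nbhd e z :&: (Z :\ z))).
  apply/subsetP => k /imsetP[t]; rewrite !inE => /andP[zt /orP[tP|tZ]] ->.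
    by apply/orP; left; rewrite (cP _ tP); apply: imset_f; rewrite !inE zt tP.
  by apply/orP; right; apply: imset_f; rewrite !inE zt.
have cF : #|F| < 3.
  have h1 := subset_leq_card FA.
  have h2 := cardsUI (c0 @: (nbhd e z :&: P)) (c @: (nbhd e z :&: (Z :\ z))).
  have h3 := leq_imset_card c (nbhd e z :&: (Z :\ z)).
  have h4 : #|nbhd e z :&: (Z :\ z)| <= #|nbhd e z :&: Z|.
    by apply: subset_leq_card; apply: setIS; apply: subD1set.
  lia.
have [k kF] : exists k : 'I_3, k \notin F.
  apply: NNPP => hk.
  have : [set: 'I_3] \subset F.
    by apply/subsetP => k _; apply: contraT => kF; case: hk; exists k.
  by move/subset_leq_card; rewrite cardsT card_ord => h; move: cF; rewrite ltnNge h.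
exists (fun t => if t == z then k else c t); split.
  by move=> x xP; case: eqP => [xz|_]; [move: xP; rewrite xz zP | exact: cP].
have inF t : e z t -> t \in P :|: (Z :\ z) -> c t \in F.
  by move=> zt ht; apply: imset_f; rewrite !inE zt /=; rewrite !inE in ht.
move=> x y hx hy exy.
case: (eqVneq x z) => [xz|xz]; case: (eqVneq y z) => [yz|yz].
- by move: exy; rewrite xz yz eirr.
- have : c y \in F by apply: inF; [rewrite -xz | rewrite !inE yz; rewrite !inE in hy].
  by move=> h; apply/eqP => kc; move: kF; rewrite kc h.
- have : c x \in F by apply: inF; [rewrite -yz esym | rewrite !inE xz; rewrite !inE in hx].
  by move=> h; apply/eqP => kc; move: kF; rewrite -kc h.
- apply: cpr => //; rewrite !inE ?xz ?yz /=; rewrite !inE in hx hy => //.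
Qed.


Lemma disj1 (u : T) (S : {set T}) : [disjoint [set u] & S] = (u \notin S).
Proof. by apply: eq_disjoint1 => w; rewrite inE. Qed.

Lemma capN z (S A : {set T}) : A \subset nbhd e z -> [disjoint A & S] ->
  #|nbhd e z :&: S| + #|A| <= 3.
Proof.
move=> sA dAS.
have h := cardsUI (nbhd e z :&: S) A.
have e0 : (nbhd e z :&: S) :&: A = set0.
  apply/setP => w; rewrite !inE; case: (boolP (w \in A)) => wA; last by rewrite andbF.
  by rewrite (disjointFr dAS wA) andbF.
rewrite e0 cards0 addn0 in h.
rewrite -h -(cub z); apply: subset_leq_card; apply/subsetP => w; rewrite !inE.
by case/orP => [/andP[]|/(subsetP sA)] //; rewrite inE.
Qed.

Lemma colorA (W : {set T}) t : t \notin W ->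
  exists c : T -> 'I_3, forall x y, x \in W -> y \in W -> e x y -> c x != c y.
Proof.
move=> tW.
pose c0 : T -> 'I_3 := fun _ => ord0.
have h0 : forall x y, x \in (set0 : {set T}) -> y \in set0 -> e x y -> c0 x != c0 y.
  by move=> x y; rewrite inE.
have hZ : forall Z : {set T}, Z \subset W -> Z != set0 ->
   exists2 z, z \in Z & #|c0 @: (nbhd e z :&: set0)| + #|nbhd e z :&: Z| < 3.
  move=> Z sZ Zn0.
  case/set0Pn: Zn0 => z0 z0Z.
  have tZ : t \notin Z by apply: contra tW; apply: (subsetP sZ).
  have [z [u [zZ uZ zu]]] := exits z0Z tZ.
  exists z => //; rewrite setI0 imset0 cards0 add0n.
  have := @capN z Z [set u]; rewrite cards1.
  have -> : [set u] \subset nbhd e z by rewrite sub1set inE.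
  by rewrite disj1 uZ => /(_ isT isT); lia.
have d0 : [disjoint (set0 : {set T}) & W] by rewrite -setI_eq0 set0I.
have [c [_ cpr]] := L1 d0 h0 hZ.
by exists c => x y xW yW; apply: cpr; rewrite inE ?xW ?yW orbT.
Qed.


Definition sw (i j k : 'I_3) : 'I_3 := if k == i then j else if k == j then i else k.

Lemma sw_invol i j : cancel (sw i j) (sw i j).
Proof.
move=> k; rewrite /sw.
case: (eqVneq k i) => [->|ki].
  by case: (eqVneq j i) => [->|ji]; rewrite ?eqxx.
case: (eqVneq k j) => [->|kj].
  by case: (eqVneq i j) => [->|ij]; rewrite ?eqxx.
by rewrite (negbTE ki) (negbTE kj).
Qed.

Lemma sw_inj i j : injective (sw i j).
Proof. exact: can_inj (sw_invol i j). Qed.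

Lemma sw_i i j : sw i j i = j.
Proof. by rewrite /sw eqxx. Qed.

Lemma avoid (S : {set 'I_3}) : #|S| < 3 -> exists k, k \notin S.
Proof.
move=> cS; apply: NNPP => hk.
have : [set: 'I_3] \subset S.
  by apply/subsetP => k _; apply: contraT => kS; case: hk; exists k.
by move/subset_leq_card; rewrite cardsT card_ord => h; move: cS; rewrite ltnNge h.
Qed.

Lemma avoid2 (i j : 'I_3) : exists k, k != i /\ k != j.
Proof.
have [k] : exists k, k \notin [set i; j] by apply: avoid; rewrite cards2; case: (i != j).
by rewrite !inE negb_or => /andP[]; exists k.
Qed.

Lemma nb3 x p q r : e x p -> e x q -> e x r -> p != q -> p != r -> q != r ->
  forall w, e x w -> [\/ w = p, w = q | w = r].
Proof.
move=> xp xq xr pq pr qr.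
have [r' [xr' r'p r'q H]] := third xp xq pq.
have rr' : r = r' by case: (H r xr) => // h; [move: pr|move: qr]; rewrite h eqxx.
by move=> w /H; rewrite -rr'.
Qed.

Lemma nbrs_of v p : e v p -> exists q r,
  [/\ e v q, e v r, q != p, r != p & q != r] /\ forall w, e v w -> [\/ w = p, w = q | w = r].
Proof.
move=> vp.
have : #|nbhd e v :\ p| == 2.
  by apply/eqP; move: (cub v); rewrite (cardsD1 p) inE vp add1n; case.
case/cards2P => q [r [qr hqr]].
have qin : q \in nbhd e v :\ p by rewrite hqr !inE eqxx.
have rin : r \in nbhd e v :\ p by rewrite hqr !inE eqxx orbT.
move: qin rin; rewrite !inE => /andP[qp vq] /andP[rp vr].
exists q, r; split => // w vw.
case: (eqVneq w p) => [->|wp]; first by apply: Or31.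
have : w \in nbhd e v :\ p by rewrite !inE wp vw.
by rewrite hqr !inE => /orP[]/eqP->; [apply: Or32|apply: Or33].
Qed.

Lemma neE x y : e x y -> x != y.
Proof. by move=> xy; apply: contraTneq xy => ->; rewrite eirr. Qed.

Lemma exists_out (K : {set T}) : #|K| < #|T| -> exists t, t \notin K.
Proof.
move=> cK; apply: NNPP => h.
have : [set: T] \subset K.
  by apply/subsetP => t _; apply: contraT => tK; case: h; exists t.
by move/subset_leq_card; rewrite cardsT => h'; move: cK; rewrite ltnNge h'.
Qed.

Hypothesis big : 6 <= #|T|.

Lemma card4 (a b c d : T) : #|[set a; b; c; d]| <= 4.
Proof.
apply: leq_trans (card_size [:: a; b; c; d]).
by apply: subset_leq_card; apply/subsetP => w; rewrite !inE -!orbA.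
Qed.

Lemma noK4 a b c d : e a b -> e a c -> e a d -> e b c -> e b d -> e c d -> False.
Proof.
move=> ab ac ad bc bd cd.
pose K := [set a; b; c; d].
have inK w : (w \in K) = [|| w == a, w == b, w == c | w == d] by rewrite !inE -!orbA.
have [t tK] : exists t, t \notin K.
  by apply: exists_out; apply: leq_ltn_trans (card4 a b c d) _; lia.
have aK : a \in K by rewrite inK eqxx.
have [z [u [zK uK zu]]] := exits aK tK.
move: uK; rewrite inK; apply/negP/negPn.
move: zK; rewrite inK => /or4P[] /eqP zE; move: zu; rewrite zE => zu.
- case: (nb3 ab ac ad (neE bc) (neE bd) (neE cd) zu) => ->; by rewrite eqxx ?orbT.
- have ba : e b a by rewrite esym.
  case: (nb3 ba bc bd (neE ac) (neE ad) (neE cd) zu) => ->; by rewrite eqxx ?orbT.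
- have ca : e c a by rewrite esym.
  have cb : e c b by rewrite esym.
  case: (nb3 ca cb cd (neE ab) (neE ad) (neE bd) zu) => ->; by rewrite eqxx ?orbT.
- have da : e d a by rewrite esym.
  have db : e d b by rewrite esym.
  have dc : e d c by rewrite esym.
  case: (nb3 da db dc (neE ab) (neE ac) (neE bc) zu) => ->; by rewrite eqxx ?orbT.
Qed.

Definition o1 : 'I_3 := @Ordinal 3 1 isT.
Definition o2 : 'I_3 := @Ordinal 3 2 isT.

Lemma sw_ne0 k (i : 'I_3) : i != k -> sw k ord0 i != ord0.
Proof. by move=> ik; rewrite -{2}(sw_i k ord0) (inj_eq (@sw_inj k ord0)). Qed.

Lemma diamond_col a b c d : a != b -> ~~ e a b -> e a c -> e a d -> e b c -> e b d -> e c d ->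
  exists col : T -> 'I_3, forall x y, e x y -> col x != col y.
Proof.
move=> ab nab ac ad bc bd cd.
have [a' [aa' a'c a'd Ha]] := third ac ad (neE cd).
have [b' [bb' b'c b'd Hb]] := third bc bd (neE cd).
have ca : e c a by rewrite esym.
have cb : e c b by rewrite esym.
have da : e d a by rewrite esym.
have db : e d b by rewrite esym.
have dc : e d c by rewrite esym.
have Hc := nb3 ca cb cd ab (neE ad) (neE bd).
have Hd := nb3 da db dc ab (neE ac) (neE bc).
pose K := [set a; b; c; d].
have inK w : (w \in K) = [|| w == a, w == b, w == c | w == d] by rewrite !inE -!orbA.
have aK : a \notin ~: K by rewrite inE inK eqxx.
have [c1 c1p] := colorA aK.
have a'K : a' \notin K.
  rewrite inK; apply/negP => /or4P[] /eqP h.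
  - by move: aa'; rewrite h eirr.
  - by move: nab; rewrite -h aa'.
  - by move: a'c; rewrite h eqxx.
  - by move: a'd; rewrite h eqxx.
have b'K : b' \notin K.
  rewrite inK; apply/negP => /or4P[] /eqP h.
  - by move: bb'; rewrite h esym (negbTE nab).
  - by move: bb'; rewrite h eirr.
  - by move: b'c; rewrite h eqxx.
  - by move: b'd; rewrite h eqxx.
have [k [k1 k2]] := avoid2 (c1 a') (c1 b').
pose col t := if t \in K then (if t == a then ord0 else if t == b then ord0
               else if t == c then o1 else o2) else sw k ord0 (c1 t).
have ac' := neE ac; have ad' := neE ad; have bc' := neE bc; have bd' := neE bd;
have cd' := neE cd.
have cola : col a = ord0 by rewrite /col inK eqxx.
have colb : col b = ord0 by rewrite /col inK eqxx orbT eq_sym (negbTE ab).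
have colc : col c = o1.
  by rewrite /col inK eqxx !orbT eq_sym (negbTE ac') eq_sym (negbTE bc').
have cold : col d = o2.
  by rewrite /col inK eqxx !orbT eq_sym (negbTE ad') eq_sym (negbTE bd') eq_sym (negbTE cd').
have colo t : t \notin K -> col t = sw k ord0 (c1 t) by rewrite /col => /negbTE->.
have HK : forall x y, x \in K -> e x y -> col x != col y.
  move=> x y; rewrite inK => /or4P[] /eqP-> xy.
  - case: (Ha _ xy) => ->; rewrite ?cola ?colc ?cold // colo //.
    by rewrite eq_sym; apply: sw_ne0; rewrite eq_sym.
  - case: (Hb _ xy) => ->; rewrite ?colb ?colc ?cold // colo //.
    by rewrite eq_sym; apply: sw_ne0; rewrite eq_sym.
  - by case: (Hc _ xy) => ->; rewrite ?cola ?colb ?colc ?cold.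
  - by case: (Hd _ xy) => ->; rewrite ?cola ?colb ?colc ?cold.
exists col => x y xy.
case: (boolP (x \in K)) => xK; first exact: HK.
case: (boolP (y \in K)) => yK; first by rewrite eq_sym; apply: HK; rewrite // esym.
rewrite !colo // (inj_eq (@sw_inj _ _)); apply: c1p => //; by rewrite inE.
Qed.

Lemma cut_col w (K : {set T}) t : K != set0 -> w \notin K ->
  (forall z u, z \in K -> e z u -> u \in K \/ u = w) -> t \notin K -> t != w ->
  exists col : T -> 'I_3, forall x y, e x y -> col x != col y.
Proof.
move=> Kn0 wK clK tK tw.
have [cK cKp] := colorA wK.
case/set0Pn: Kn0 => k0 k0K.
have k0B : k0 \notin ~: K by rewrite inE k0K.
have [cB cBp] := colorA k0B.
have hw : #|nbhd e w :&: K| < 3.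
  rewrite ltn_neqAle -{2}(cub w) subset_leq_card ?subsetIl // andbT.
  apply/negP => /eqP h3.
  have sub : nbhd e w \subset K.
    have : nbhd e w :&: K = nbhd e w.
      by apply/eqP; rewrite eqEcard subsetIl h3 cub leqnn.
    by move/setIidPl.
  have wK' : w \in w |: K by rewrite !inE eqxx.
  have tK' : t \notin w |: K by rewrite !inE negb_or tw tK.
  have [z [u [zK' uK' zu]]] := exits wK' tK'.
  move: zK' uK'; rewrite !inE negb_or => /orP[/eqP zw|zK] /andP[uw uK].
  - have : u \in K by apply: (subsetP sub); rewrite inE -zw.
    by rewrite (negbTE uK).
  - by case: (clK _ _ zK zu) => [uK'|/eqP]; [rewrite uK' in uK| rewrite (negbTE uw)].
have [j hj] := avoid (leq_ltn_trans (leq_imset_card cK _) hw).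
pose g := sw (cB w) j.
pose col x := if x \in K then cK x else g (cB x).
have inI x : x \in K -> e x w -> cK x \in cK @: (nbhd e w :&: K).
  by move=> xK xw; apply: imset_f; rewrite !inE esym xw xK.
exists col => x y xy.
rewrite /col; case: (boolP (x \in K)) => xK; case: (boolP (y \in K)) => yK.
- exact: cKp.
- case: (clK _ _ xK xy) => [|yw]; first by rewrite (negbTE yK).
  have h : cK x \in cK @: (nbhd e w :&: K) by apply: inI; rewrite // -yw.
  by rewrite yw /g sw_i; apply/eqP => E; move: hj; rewrite -E h.
- have yx : e y x by rewrite esym.
  case: (clK _ _ yK yx) => [|xw]; first by rewrite (negbTE xK).
  have h : cK y \in cK @: (nbhd e w :&: K) by apply: inI; rewrite // -xw.
  by rewrite xw /g sw_i; apply/eqP => E; move: hj; rewrite E h.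
- rewrite /g (inj_eq (@sw_inj _ _)); apply: cBp => //; by rewrite inE.
Qed.

Definition closed2 x y (Z : {set T}) :=
  forall z w, z \in Z -> e z w -> [\/ w \in Z, w = x | w = y].
Definition bad x y (Z : {set T}) :=
  [/\ Z != set0, x \notin Z, y \notin Z, closed2 x y Z &
       forall z, z \in Z -> e z x -> e z y -> False].
Definition NCV := forall w (K : {set T}), K != set0 -> w \notin K ->
  (forall z u, z \in K -> e z u -> u \in K \/ u = w) -> forall t, t \in K \/ t = w.

Lemma descent (ncv : NCV) x y Z p q c : x != y -> bad x y Z -> p \in Z ->
  (q \in Z \/ q = y) -> p != q -> e c p -> e c q ->
  (c = x \/ [/\ e x c, c != p & c != q] \/
     exists a, [/\ e x a, e a c, a != p & a != q] /\ (c != p /\ c != q)) ->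
  forall Z', bad p q Z' -> #|Z'| < #|Z|.
Proof.
move=> xy [Zn0 xZ yZ clZ nocomm] pZ qZy pq cp cq link Z' [Z'n0 pZ' qZ' clZ' nocomm'].
have cZ' : c \notin Z' by apply/negP => cz; apply: (nocomm' c cz cp cq).
have xZ' : x \notin Z'.
  apply/negP => xz.
  case: link => [cx|[[xc cp' cq']|[a [[xa ac ap aq] [cp' cq']]]]].
  - by move: cZ'; rewrite cx xz.
  - case: (clZ' _ _ xz xc) => [cz|cp2|cq2]; first by rewrite cz in cZ'.
      by rewrite cp2 eqxx in cp'.
    by rewrite cq2 eqxx in cq'.
  - case: (clZ' _ _ xz xa) => [az|ap2|aq2]; last by rewrite aq2 eqxx in aq.
      case: (clZ' _ _ az ac) => [cz|cp2|cq2]; first by rewrite cz in cZ'.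
        by rewrite cp2 eqxx in cp'.
      by rewrite cq2 eqxx in cq'.
    by rewrite ap2 eqxx in ap.
have inZy : forall t, t \in Z' -> t \in Z \/ t = y.
  move=> t tZ'; apply: NNPP => h.
  pose K := [set u in Z' | (u \notin Z) && (u != y)].
  have tK : t \in K.
    rewrite inE tZ' /=; apply/andP; split; apply/negP => h'; apply: h.
      by left.
    by right; apply/eqP.
  have yK : y \notin K by rewrite inE eqxx !andbF.
  have clK : forall z u, z \in K -> e z u -> u \in K \/ u = y.
    move=> z u; rewrite inE => /andP[zZ' /andP[zZ zy]] zu.
    have uZ : u \notin Z.
      apply/negP => uZ; have uz : e u z by rewrite esym.
      case: (clZ _ _ uZ uz) => [zZ2|zx|zy2]; first by rewrite zZ2 in zZ.
        by rewrite -zx zZ' in xZ'.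
      by rewrite zy2 eqxx in zy.
    case: (clZ' _ _ zZ' zu) => [uZ'|up|uq].
    - case: (eqVneq u y) => [->|uy]; first by right.
      by left; rewrite inE uZ' uZ uy.
    - by rewrite up pZ in uZ.
    - case: qZy => [qZ|qy]; first by rewrite uq qZ in uZ.
      by right; rewrite uq qy.
  have Kn0 : K != set0 by apply/set0Pn; exists t.
  case: (ncv y K Kn0 yK clK x) => [|xy2]; last by rewrite xy2 eqxx in xy.
  by rewrite inE => /andP[xz _]; rewrite xz in xZ'.
have sub : Z' \subset (y |: Z) :\: [set p; q].
  apply/subsetP => t tZ'; rewrite !inE negb_or.
  have -> : t != p by apply: contraNneq pZ' => <-.
  have -> : t != q by apply: contraNneq qZ' => <-.
  by case: (inZy t tZ') => [->|->]; rewrite ?eqxx ?orbT.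
have pqs : [set p; q] \subset y |: Z.
  apply/subsetP => w; rewrite !inE => /orP[]/eqP->; first by rewrite pZ orbT.
  by case: qZy => [->|->]; rewrite ?eqxx ?orbT.
have := subset_leq_card sub.
rewrite cardsD (setIidPr pqs) cardsU1 yZ cards2 pq.
have : 0 < #|Z| by rewrite card_gt0.
move=> h0 h; apply: leq_ltn_trans h _.
by rewrite /= add1n subSS subn1 ltn_predL.
Qed.

Definition nodia := forall a b c d, a != b -> ~~ e a b -> e a c -> e a d ->
  e b c -> e b d -> e c d -> False.

Lemma find_pair (ncv : NCV) (nd : nodia) x y Z : x != y -> ~~ e x y -> bad x y Z ->
  exists p q, [/\ p != q, ~~ e p q & forall Z', bad p q Z' -> #|Z'| < #|Z|].
Proof.
move=> xy nxy bZ; have [Zn0 xZ yZ clZ nocomm] := bZ.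
have [a [aZ ax]] : exists a, a \in Z /\ e a x.
  apply: NNPP => h.
  have clY : forall z u, z \in Z -> e z u -> u \in Z \/ u = y.
    move=> z u zZ zu; case: (clZ _ _ zZ zu) => [|ux|]; [by left| |by right].
    by case: h; exists z; rewrite -ux.
  case: (ncv y Z Zn0 yZ clY x) => [xz|xy']; first by rewrite xz in xZ.
  by rewrite xy' eqxx in xy.
have [u1 [u2 [[au1 au2 u1x u2x u12] Ha]]] := nbrs_of ax.
have inZ u : e a u -> u != x -> u \in Z.
  move=> au ux; case: (clZ _ _ aZ au) => [//|uxe|uy]; first by rewrite uxe eqxx in ux.
  by case: (nocomm a aZ ax); rewrite -uy.
have u1Z := inZ _ au1 u1x; have u2Z := inZ _ au2 u2x.
have xa : e x a by rewrite esym.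
have inZy u w : u \in Z -> e u w -> w != x -> w \in Z \/ w = y.
  move=> uZ uw wx; case: (clZ _ _ uZ uw) => [|wxe|]; [by left| |by right].
  by rewrite wxe eqxx in wx.
case: (boolP (e u1 u2)) => u1u2; last first.
  exists u1, u2; split => //.
  apply: (descent ncv xy bZ u1Z (or_introl u2Z) u12 au1 au2).
  by right; left; split => //; apply: neE.
have u1a : e u1 a by rewrite esym.
have u2a : e u2 a by rewrite esym.
have u2u1 : e u2 u1 by rewrite esym.
have [w1 [u1w1 w1a w1u2 H1]] := third u1a u1u2 (neE au2).
have [w2 [u2w2 w2a w2u1 H2]] := third u2a u2u1 (neE au1).
case: (eqVneq w1 w2) => [w12|w12].
  exfalso; case: (eqVneq w1 x) => [w1x|w1x].
    have xu1 : e x u1 by rewrite esym -w1x.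
    have xu2 : e x u2 by rewrite esym -w1x w12.
    exact: (noK4 xa xu1 xu2 au1 au2 u1u2).
  have aw1 : ~~ e a w1.
    apply/negP => aw1; case: (Ha _ aw1) => h.
    - by rewrite h eqxx in w1x.
    - by move: u1w1; rewrite -h eirr.
    - by rewrite h eqxx in w1u2.
  apply: (nd a w1 u1 u2) => //.
  - by rewrite eq_sym.
  - by rewrite esym.
  - by rewrite esym w12.
case: (eqVneq w1 x) => [w1x|w1x].
  have w2x : w2 != x by rewrite -w1x eq_sym.
  exists u1, w2; split.
  - by rewrite eq_sym.
  - apply/negP => u1w2; case: (H1 _ u1w2) => h.
    + by rewrite h eqxx in w2a.
    + by move: u2w2; rewrite h eirr.
    + by rewrite h eqxx in w12.
  apply: (descent ncv xy bZ u1Z (inZy _ _ u2Z u2w2 w2x) _ u2u1 u2w2).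
    by rewrite eq_sym.
  right; right; exists a; split; split => //; first exact: neE.
  - by rewrite eq_sym.
  - by rewrite eq_sym.
  - exact: neE.
exists u2, w1; split.
- by rewrite eq_sym.
- apply/negP => u2w1; case: (H2 _ u2w1) => h.
  + by rewrite h eqxx in w1a.
  + by move: u1w1; rewrite h eirr.
  + by rewrite h eqxx in w12.
apply: (descent ncv xy bZ u2Z (inZy _ _ u1Z u1w1 w1x) _ u1u2 u1w1).
  by rewrite eq_sym.
right; right; exists a; split; split => //; first exact: neE.
- by rewrite eq_sym.
- exact: neE.
Qed.

Lemma key (ncv : NCV) (nd : nodia) : forall n x y (Z : {set T}), #|Z| <= n -> x != y ->
  ~~ e x y -> bad x y Z ->
  exists p q, [/\ p != q, ~~ e p q & forall Z', ~ bad p q Z'].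
Proof.
elim=> [|n IH] x y Z cZ xy nxy bZ.
  have [Zn0 _ _ _ _] := bZ.
  by move: cZ; rewrite leqn0 cards_eq0 (negbTE Zn0).
have [p [q [pq npq H]]] := find_pair ncv nd xy nxy bZ.
case: (classic (exists Z', bad p q Z')) => [[Z' bZ']|nb].
  by apply: (IH p q Z') => //; rewrite -ltnS; apply: leq_trans (H Z' bZ') cZ.
by exists p, q; split => // Z' bZ'; apply: nb; exists Z'.
Qed.

Lemma ncv_col (ncv : NCV) (nd : nodia) :
  exists col : T -> 'I_3, forall x y, e x y -> col x != col y.
Proof.
have [x _] : exists x, x \notin (set0 : {set T}).
  by apply: exists_out; rewrite cards0; lia.
have [y yN] : exists y, y \notin x |: nbhd e x.
  apply: exists_out; rewrite cardsU1 cub.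
  by apply: leq_ltn_trans _ big; case: (x \notin _).
move: yN; rewrite !inE negb_or => /andP[yx nxy].
have [p [q [pq npq good]]] : exists p q, [/\ p != q, ~~ e p q & forall Z', ~ bad p q Z'].
  case: (classic (exists Z, bad x y Z)) => [[Z bZ]|nb].
    by apply: (key ncv nd (leqnn _) _ nxy bZ); rewrite eq_sym.
  by exists x, y; split => //; [rewrite eq_sym | move=> Z bZ; apply: nb; exists Z].
pose P := [set p; q].
pose c0 : T -> 'I_3 := fun _ => ord0.
have dP : [disjoint P & ~: P] by rewrite disjoints_subset setCK.
have p0 : forall u v, u \in P -> v \in P -> e u v -> c0 u != c0 v.
  move=> u v; rewrite !inE => /orP[]/eqP-> /orP[]/eqP->; rewrite ?eirr //.
    by rewrite (negbTE npq).
  by rewrite esym (negbTE npq).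
have hZ : forall Z : {set T}, Z \subset ~: P -> Z != set0 ->
   exists2 z, z \in Z & #|c0 @: (nbhd e z :&: P)| + #|nbhd e z :&: Z| < 3.
  move=> Z sZ Zn0.
  have notP w : w \in Z -> w \notin P by move=> wZ; move: (subsetP sZ w wZ); rewrite inE.
  case: (classic (exists z u, [/\ z \in Z, e z u, u \notin Z & u \notin P])).
    move=> [z [u [zZ zu uZ uP]]]; exists z => //.
    have h1 := leq_imset_card c0 (nbhd e z :&: P).
    have := @capN z Z (u |: (nbhd e z :&: P)).
    have -> : u |: (nbhd e z :&: P) \subset nbhd e z.
      by apply/subsetP => w; rewrite !inE => /orP[/eqP->|/andP[]//]; rewrite zu.
    have -> : [disjoint u |: (nbhd e z :&: P) & Z].
      rewrite -setI_eq0; apply/eqP/setP => w; rewrite !inE.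
      case: (eqVneq w u) => [->|wu] /=; first by rewrite (negbTE uZ) ?andbF.
      case: (boolP (w \in Z)) => wZ; last by rewrite andbF.
      by move: (notP _ wZ); rewrite !inE negb_or => /andP[wp wq]; rewrite (negbTE wp) (negbTE wq) /= ?andbF.
    rewrite cardsU1 inE (negbTE uP) andbF /= => /(_ isT isT) h2.
    move: h1 h2; rewrite add1n => h1 h2; apply: leq_ltn_trans (leq_add h1 (leqnn _)) _; rewrite addnC; apply: leq_trans h2; by rewrite addnS.
  move=> nex.
  have cl : closed2 p q Z.
    move=> z w zZ zw; apply: NNPP => h; apply: nex; exists z, w; split => //.
      by apply/negP => wZ; apply: h; apply: Or31.
    by rewrite !inE negb_or; apply/andP; split; apply/negP => /eqP E; apply: h;
      [apply: Or32|apply: Or33].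
  have [z [zZ zp zq]] : exists z, [/\ z \in Z, e z p & e z q].
    apply: NNPP => h; apply: (good Z); split => //.
    - by apply/negP => pZ; move: (notP _ pZ); rewrite !inE eqxx.
    - by apply/negP => qZ; move: (notP _ qZ); rewrite !inE eqxx orbT.
    - by move=> z zZ zp zq; apply: h; exists z.
  exists z => //.
  have h1 : #|c0 @: (nbhd e z :&: P)| <= 1.
    have sub1 : c0 @: (nbhd e z :&: P) \subset [set (ord0 : 'I_3)].
      by apply/subsetP => k /imsetP[w _ ->]; rewrite inE.
    by have := subset_leq_card sub1; rewrite cards1.
  have := @capN z Z [set p; q].
  have -> : [set p; q] \subset nbhd e z.
    by apply/subsetP => w; rewrite !inE => /orP[]/eqP->; rewrite ?zp ?zq.
  have -> : [disjoint [set p; q] & Z].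
    rewrite -setI_eq0; apply/eqP/setP => w; rewrite !inE.
    case: (boolP (w \in Z)) => wZ; last by rewrite andbF.
    by move: (notP _ wZ); rewrite !inE negb_or => /andP[wp wq]; rewrite (negbTE wp) (negbTE wq).
  rewrite cards2 pq => /(_ isT isT) h2.
  apply: leq_ltn_trans (leq_add h1 (leqnn _)) _.
  by move: h2 => /= h2; rewrite add1n; apply: leq_trans h2; rewrite addn2.
have [col [_ colp]] := L1 dP p0 hZ.
by exists col => u v uv; apply: colp; rewrite ?setUCr ?inE.
Qed.

Lemma brooks : exists col : T -> 'I_3, forall x y, e x y -> col x != col y.
Proof.
case: (classic (exists a b c d, [/\ a != b, ~~ e a b, e a c & e a d] /\
                                [/\ e b c, e b d & e c d])).
  by move=> [a [b [c [d [[h1 h2 h3 h4] [h5 h6 h7]]]]]]; exact: diamond_col h1 h2 h3 h4 h5 h6 h7.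
move=> nd.
case: (classic (exists w (K : {set T}) t, [/\ K != set0, w \notin K,
   (forall z u, z \in K -> e z u -> u \in K \/ u = w), t \notin K & t != w])).
  by move=> [w [K [t [h1 h2 h3 h4 h5]]]]; exact: cut_col h1 h2 h3 h4 h5.
move=> nc; apply: ncv_col.
  move=> w K Kn0 wK clK t; apply: NNPP => h; apply: nc; exists w, K, t; split => //.
    by apply/negP => tK; apply: h; left.
  by apply/eqP => tw; apply: h; right.
by move=> a b c d h1 h2 h3 h4 h5 h6 h7; apply: nd; exists a, b, c, d.
Qed.

Lemma alpha_ge (S : {set T}) : independent e S -> #|S| <= alpha e.
Proof. by move=> iS; apply: (@leq_bigmax_cond _ (independent e) (fun S => #|S|)). Qed.

Lemma three_alpha : #|T| <= 3 * alpha e.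
Proof.
have [col colp] := brooks.
pose C (k : 'I_3) := [set x | col x == k].
have iC k : independent e (C k).
  apply/forallP => x; apply/implyP; rewrite inE => /eqP xk.
  apply/forallP => y; apply/implyP; rewrite inE => /eqP yk.
  by apply/negP => xy; move: (colp _ _ xy); rewrite xk yk eqxx.
have -> : #|T| = \sum_(k < 3) #|C k|.
  rewrite -sum1_card (partition_big col xpredT) //=.
  by apply: eq_bigr => k _; rewrite -sum1_card; apply: eq_bigl => x; rewrite inE.
apply: (@leq_trans (\sum_(k < 3) alpha e)).
  by apply: leq_sum => k _; exact: alpha_ge.
by rewrite sum_nat_const card_ord mulnC.
Qed.

Lemma cardE (R : {set T}) (P : pred T) : #|[set s in R | P s]| = \sum_(s in R) P s.
Proof.
rewrite -sum1_card big_mkcond [RHS]big_mkcond /=; apply: eq_bigr => s _.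
by rewrite !inE; case: (s \in R); case: (P s).
Qed.

Lemma main : 3 * diss e <= 5 * alpha e.
Proof.
have d0 : dissociation e set0 by apply/forallP => x; rewrite inE.
have [D hD cD] : exists2 D, dissociation e D & diss e = #|D|.
  case: (@arg_maxnP _ set0 (dissociation e) (fun D => #|D|) d0) => D hD hmax.
  exists D => //; apply/eqP; rewrite eqn_leq; apply/andP; split.
    by apply/bigmax_leqP => S hS; exact: hmax.
  exact: (@leq_bigmax_cond _ (dissociation e) (fun S => #|S|)).
pose R := ~: D.
have inter x : #|nbhd e x :&: D| + #|nbhd e x :&: R| = 3.
  by rewrite -(cub x) -(cardsID D (nbhd e x)) setDE.
have dis x : x \in D -> #|nbhd e x :&: D| <= 1.
  by move=> xD; move/forallP: hD => /(_ x) /implyP /(_ xD); rewrite setIC.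
pose rk (x : T) : nat := nat_of_ord (enum_rank x).
have rk_inj : injective rk.
  by move=> x y /ord_inj; apply: enum_rank_inj.
pose S := [set r in R | [forall s in R, e r s ==> (rk r < rk s)]].
have iS : independent e S.
  apply/forallP => x; apply/implyP => xS; apply/forallP => y; apply/implyP => yS.
  apply/negP => xy.
  move: xS yS; rewrite !inE => /andP[xR /forallP hx] /andP[yR /forallP hy].
  move: (hx y) (hy x); rewrite !inE yR xR xy esym xy /= => h1 h2.
  by move: (ltn_trans h1 h2); rewrite ltnn.
pose low r := [set s in R | e r s && (rk s < rk r)].
pose high r := [set s in R | e r s && (rk r < rk s)].
have NR x (A : {set T}) : nbhd e x :&: A = [set s in A | e x s].
  by apply/setP => s; rewrite !inE andbC.
have spl r : #|nbhd e r :&: R| = #|low r| + #|high r|.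
  rewrite NR !cardE -big_split /=; apply: eq_bigr => s _.
  case: (boolP (e r s)) => ers //=.
  have : rk s != rk r by rewrite (inj_eq rk_inj) eq_sym; apply: neE.
  by case: ltngtP.
have sym : \sum_(r in R) #|low r| = \sum_(r in R) #|high r|.
  rewrite (eq_bigr (fun r => \sum_(s in R) (e r s && (rk s < rk r)))); last first.
    by move=> r _; rewrite cardE.
  rewrite [RHS](eq_bigr (fun r => \sum_(s in R) (e r s && (rk r < rk s)))); last first.
    by move=> r _; rewrite cardE.
  rewrite exchange_big; apply: eq_bigr => s _; apply: eq_bigr => r _.
  by rewrite esym.
have lowL : #|R :\: S| <= \sum_(r in R) #|low r|.
  rewrite -sum1_card.
  rewrite [X in _ <= X](bigID (fun r => r \in S)) /=.
  apply: leq_trans (leq_addl _ _).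
  rewrite [X in _ <= X](eq_bigl (fun r => r \in R :\: S)); last first.
    by move=> r; rewrite !inE andbC.
  apply: leq_sum => r; rewrite !inE => /andP[rS rR].
  rewrite card_gt0; apply/set0Pn.
  move: rS; rewrite rR /= negb_forall => /existsP[s]; rewrite negb_imply => /andP[sR].
  rewrite negb_imply => /andP[rs hs].
  exists s; rewrite inE; apply/andP; split => //; rewrite rs /=.
  have : rk s != rk r by rewrite (inj_eq rk_inj) eq_sym; apply: neE.
  by move: hs; case: ltngtP.
have eDR : \sum_(x in D) #|nbhd e x :&: R| = \sum_(r in R) #|nbhd e r :&: D|.
  rewrite (eq_bigr (fun x => \sum_(s in R) e x s)); last by move=> x _; rewrite NR cardE.
  rewrite [RHS](eq_bigr (fun r => \sum_(s in D) e r s)); last by move=> x _; rewrite NR cardE.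
  rewrite exchange_big; apply: eq_bigr => s _; apply: eq_bigr => r _.
  by rewrite esym.
have F1 : 2 * #|D| <= \sum_(x in D) #|nbhd e x :&: R|.
  rewrite mulnC -sum_nat_const; apply: leq_sum => x xD.
  have h := inter x; have hd := dis x xD.
  by rewrite -(leq_add2l #|nbhd e x :&: D|) h addn2 !ltnS.
have F2 : \sum_(r in R) #|nbhd e r :&: D| + \sum_(r in R) #|nbhd e r :&: R| = 3 * #|R|.
  rewrite -big_split /= (eq_bigr (fun _ => 3)); last by move=> r _; apply: inter.
  by rewrite sum_nat_const mulnC.
have F3 : \sum_(r in R) #|nbhd e r :&: R| =
          \sum_(r in R) #|low r| + \sum_(r in R) #|high r|.
  by rewrite -big_split /=; apply: eq_bigr => r _; apply: spl.
have F6 : #|S| + #|R :\: S| = #|R|.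
  have sSR : S \subset R by apply/subsetP => x; rewrite inE => /andP[].
  by rewrite -(cardsID S R) (setIidPr sSR).
have F7 : #|D| + #|R| = #|T| by apply: cardsC.
have F8 := three_alpha.
have F9 := alpha_ge iS.
rewrite cD.
move: F1 F2 F3 F6 F7 F8 F9 sym lowL eDR.
move: (\sum_(x in D) _) (\sum_(r in R) #|nbhd e r :&: D|) (\sum_(r in R) #|nbhd e r :&: R|)
  (\sum_(r in R) #|low r|) (\sum_(r in R) #|high r|) => A B C L H.
move: #|S| #|R :\: S| #|R| #|D| #|T| (alpha e) => s l r d n a.
clear inter dis NR spl iS rk_inj hD cD d0 big.
lia.
Qed.

End G.

Theorem theorem1 (T : finType) (e : rel T) :
  simple_graph e -> cubic e -> connected_graph e -> 6 <= #|T| ->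
  3 * diss e <= 5 * alpha e.
Proof.
move=> [sy ir] cu co bg.
exact: (@main T e sy ir cu co bg).
Qed.
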